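(* Let $n_d\ge 1$, let $S_1,\dots,S_{n_d}>0$, and let $\underline{P_0}\le\overline{P_0}$ be real numbers. For $S>0$ define $\mathcal{X}(S,\underline{P_0},\overline{P_0})=\{(P,Q)\in\mathbb{R}^2: S\underline{P_0}\le P\le S\overline{P_0},\ Q^2\le S^2-P^2\}$. Then $$\bigoplus_{i=1}^{n_d}\mathcal{X}(S_i,\underline{P_0},\overline{P_0})=\mathcal{X}\Big(\sum_{i=1}^{n_d}S_i,\underline{P_0},\overline{P_0}\Big).$$
   Context: $\oplus$ denotes the Minkowski sum $A\oplus B=\{a+b: a\in A, b\in B\}$. The set $\mathcal{X}(S,\underline{P},\overline{P})$ is the feasible real/reactive power set of an inverter with apparent power rating $S$ and normalized real power bounds $\underline{P},\overline{P}$. *)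

(* Defs.v *)
From Stdlib Require Import Reals.
Open Scope R_scope.

Definition set2 := R * R -> Prop.

Definition Xset (S Plo Phi : R) : set2 :=
  fun z => S * Plo <= fst z <= S * Phi /\ (snd z) ^ 2 <= S ^ 2 - (fst z) ^ 2.

Definition msum2 (A B : set2) : set2 :=
  fun z => exists a b, A a /\ B b /\ z = (fst a + fst b, snd a + snd b).

Fixpoint msum (n : nat) (X : nat -> set2) : set2 :=
  match n with
  | O => fun z => z = (0, 0)
  | S m => msum2 (msum m X) (X m)
  end.

Fixpoint rsum (n : nat) (f : nat -> R) : R :=
  match n with
  | O => 0
  | S m => rsum m f + f m
  end.

(* Main.v *)
Require Import Defs.
From Stdlib Require Import Reals Lra Psatz Lia.
Open Scope R_scope.

Lemma two_sets (a b Plo Phi : R) (z : R * R) :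
  0 < a -> 0 < b ->
  msum2 (Xset a Plo Phi) (Xset b Plo Phi) z <-> Xset (a + b) Plo Phi z.
Proof.
  intros Ha Hb. destruct z as [p q]. unfold msum2, Xset; simpl. split.
  - intros [[pu qu] [[pv qv] [[[H1 H2] H3] [[[H4 H5] H6] E]]]]. simpl in *.
    injection E as -> ->.
    split; [lra|].
    assert (CS : (pu*pv+qu*qv)^2 <= (a*b)^2).
    { assert (0 <= (pu*qv - qu*pv)^2) by apply pow2_ge_0.
      assert (pu^2+qu^2 <= a^2) by lra.
      assert (pv^2+qv^2 <= b^2) by lra.
      assert (0 <= pu^2+qu^2) by nra.
      assert (0 <= pv^2+qv^2) by nra.
      assert ((pu^2+qu^2)*(pv^2+qv^2) <= a^2*b^2).
      { apply Rmult_le_compat; lra. }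
      nra. }
    assert (D : pu*pv+qu*qv <= a*b).
    { destruct (Rle_dec (pu*pv+qu*qv) 0). nra.
      assert (0 < a*b) by nra. nra. }
    nra.
  - intros [[H1 H2] H3].
    set (c := a + b). set (t := a / c).
    assert (Hc : 0 < c) by (unfold c; lra).
    assert (Ea : a = t * c) by (unfold t; field; lra).
    assert (Eb : b = (1 - t) * c) by (unfold t, c; field; lra).
    assert (Ht0 : 0 < t) by (unfold t; apply Rdiv_lt_0_compat; lra).
    assert (Ht1 : 0 < 1 - t) by (rewrite Eb in Hb; nra).
    fold c in H1, H2, H3.
    exists (t*p, t*q), ((1-t)*p, (1-t)*q). simpl.
    rewrite Ea, Eb.
    split; [|split].
    + split; [split|].
      * apply Rmult_le_compat_l with (r := t) in H1; lra.
      * apply Rmult_le_compat_l with (r := t) in H2; lra.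
      * assert (0 < t*t) by nra. nra.
    + split; [split|].
      * apply Rmult_le_compat_l with (r := 1 - t) in H1; lra.
      * apply Rmult_le_compat_l with (r := 1 - t) in H2; lra.
      * assert (0 < (1-t)*(1-t)) by nra. nra.
    + f_equal; ring.
Qed.

Lemma gen (m : nat) (f : nat -> R) (Plo Phi : R) :
  (forall i, (i < Datatypes.S m)%nat -> 0 < f i) ->
  (forall z, msum (Datatypes.S m) (fun i => Xset (f i) Plo Phi) z <->
             Xset (rsum (Datatypes.S m) f) Plo Phi z)
  /\ 0 < rsum (Datatypes.S m) f.
Proof.
  induction m as [|m IH]; intros Hf.
  - simpl. assert (H0 : 0 < f 0%nat) by (apply Hf; lia).
    split; [|lra]. intros [p q]. unfold msum2. split.
    + intros [a [b [Ha [Hb E]]]]. subst a. simpl in E.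
      destruct b as [pb qb]. simpl in E. injection E as -> ->.
      replace (0 + pb) with pb by ring. replace (0 + qb) with qb by ring.
      replace (0 + f 0%nat) with (f 0%nat) by ring. exact Hb.
    + intros H. exists (0,0), (p,q). split; [reflexivity|]. split.
      * replace (f 0%nat) with (0 + f 0%nat) by ring. exact H.
      * simpl. f_equal; ring.
  - assert (Hm : forall i, (i < Datatypes.S m)%nat -> 0 < f i) by (intros; apply Hf; lia).
    destruct (IH Hm) as [IH1 IH2].
    assert (Hl : 0 < f (Datatypes.S m)) by (apply Hf; lia).
    split; [|simpl in *; lra].
    intros z. change (msum2 (msum (Datatypes.S m) (fun i => Xset (f i) Plo Phi))
                           (Xset (f (Datatypes.S m)) Plo Phi) z <->
                      Xset (rsum (Datatypes.S m) f + f (Datatypes.S m)) Plo Phi z).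
    rewrite <- two_sets by assumption.
    unfold msum2. split; intros [a [b [Ha [Hb E]]]]; exists a, b;
      (split; [apply IH1; exact Ha|]); auto.
Qed.

Theorem theorem1 (nd : nat) (S : nat -> R) (Plo Phi : R) :
  (1 <= nd)%nat ->
  (forall i, (i < nd)%nat -> 0 < S i) ->
  Plo <= Phi ->
  forall z : R * R,
    msum nd (fun i => Xset (S i) Plo Phi) z <-> Xset (rsum nd S) Plo Phi z.
Proof.
  intros Hn HS _ z. destruct nd as [|m]; [lia|].
  exact (proj1 (gen m S Plo Phi HS) z).
Qed.
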